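(* Let $X,Y$ be real Banach spaces with a bilinear map $\langle\cdot,\cdot\rangle\colon X\times Y\to\mathbb{R}$ satisfying (B1)–(B5) below. Let $\mathcal{I}\subset\mathbb{N}$ be infinite, $n\in\mathbb{N}$, $L\in2\mathbb{N}$ and $\eta>0$. Then for all bounded sequences $(x_j)$ in $X$ and $(y_j)$ in $Y$ there exists an infinite set $\Lambda\subset\mathcal{I}$ such that $$\sup\Bigl\{\Bigl|\Bigl\langle\sum_{k\in\mathcal{B}}\varepsilon_kx_k,y_j\Bigr\rangle\Bigr|:\mathcal{B}\subset\Lambda,\ |\mathcal{B}|=L,\ \varepsilon\in\mathcal{E}(\mathcal{B}),\ 1\le j\le n\Bigr\}\le\eta,$$ $$\sup\Bigl\{\Bigl|\Bigl\langle x_j,\sum_{k\in\mathcal{B}}\varepsilon_ky_k\Bigr\rangle\Bigr|:\mathcal{B}\subset\Lambda,\ |\mathcal{B}|=L,\ \varepsilon\in\mathcal{E}(\mathcal{B}),\ 1\le j\le n\Bigr\}\le\eta,$$ where $\mathcal{E}(\mathcal{B})=\{(\varepsilon_k)\in\{\pm1\}^{\mathcal{B}}:\sum_{k\in\mathcal{B}}\varepsilon_k=0\}$.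
   Context: Standing assumptions: (B1) if $\langle x,y\rangle=0$ for all $y\in Y$ then $x=0$; (B2) if $\langle x,y\rangle=0$ for all $x\in X$ then $y=0$; (B3) there is $C_d>0$ with $|\langle x,y\rangle|\le C_d\|x\|\|y\|$; and there are normalized sequences $(e_j)\subset X$, $(f_j)\subset Y$ with (B4) $\langle e_j,f_k\rangle=1$ if $j=k$ and $0$ otherwise, and (B5) every $x\in X$ has the unique representation $x=\sum_j\langle x,f_j\rangle e_j$ converging in $\sigma(X,Y)$, the locally convex topology on $X$ generated by the seminorms $x\mapsto|\langle x,y\rangle|$, $y\in Y$. *)

(* Defs.v *)
From HB Require Import structures.
From mathcomp Require Import all_boot all_order all_algebra.
From mathcomp Require Import all_classical all_reals all_analysis.
From mathcomp Require Import finmap.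
Set Implicit Arguments. Unset Strict Implicit. Unset Printing Implicit Defensive.
Import Order.TTheory GRing.Theory Num.Theory.
Import numFieldNormedType.Exports.
Local Open Scope classical_set_scope.
Local Open Scope ring_scope.

Definition bilinear_pairing (R : realType) (X Y : normedModType R)
  (pair : X -> Y -> R) : Prop :=
  (forall (a : R) (x1 x2 : X) (y : Y),
      pair (a *: x1 + x2) y = a * pair x1 y + pair x2 y) /\
  (forall (a : R) (x : X) (y1 y2 : Y),
      pair x (a *: y1 + y2) = a * pair x y1 + pair x y2).

(* (B1)-(B5) of the paper, for given normalized sequences e, f. *)
Definition standing_assumptions (R : realType) (X Y : normedModType R)
  (pair : X -> Y -> R) (Cd : R) (e : nat -> X) (f : nat -> Y) : Prop :=
  [/\ (forall x : X, (forall y : Y, pair x y = 0) -> x = 0),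
      (forall y : Y, (forall x : X, pair x y = 0) -> y = 0),
      0 < Cd /\ (forall x y, `|pair x y| <= Cd * `|x| * `|y|),
      [/\ (forall j, `|e j| = 1), (forall j, `|f j| = 1) &
          (forall j k, pair (e j) (f k) = if j == k then 1 else 0)] &
      (* B5: for every x, the coefficient sequence a with
         x = sum_j a_j e_j in sigma(X,Y) (i.e. for every y the partial sums
         of sum_j a_j <e_j,y> converge to <x,y>) exists and is unique,
         namely a_j = <x,f_j>. *)
      (forall (x : X) (a : nat -> R),
         (forall y : Y,
            (fun N : nat => \sum_(j < N) a j * pair (e j) y) @ \oo
              --> pair x y)
         <-> a = (fun j => pair x (f j)))].

Definition balanced_signs (R : realType) (B : {fset nat}) (eps : nat -> R) : Prop :=
  (forall k, k \in B -> eps k = 1 \/ eps k = -1) /\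
  \sum_(k <- B) eps k = 0.

(* Main.v *)
Require Import Defs.
From HB Require Import structures.
From mathcomp Require Import all_boot all_order all_algebra.
From mathcomp Require Import all_classical all_reals all_analysis.
From mathcomp Require Import finmap.
Import Order.TTheory GRing.Theory Num.Theory.
Import numFieldNormedType.Exports.
Local Open Scope classical_set_scope.
Local Open Scope ring_scope.

Lemma halve_step (R : realType) (a : nat -> R) (S : set nat) (lo w : R) :
  infinite_set S -> (forall k, S k -> lo <= a k <= lo + w) ->
  exists S', [/\ S' `<=` S, infinite_set S' &
    exists lo', forall k, S' k -> lo' <= a k <= lo' + w / 2].
Proof.
move=> Sinf Hb.
pose S1 := S `&` [set k | a k <= lo + w / 2].
pose S2 := S `&` [set k | lo + w / 2 < a k].
have HS : S = S1 `|` S2.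
  rewrite /S1 /S2 -setIUr; apply/seteqP; split => k /=.
    by move=> Sk; split => //; case: (leP (a k) (lo + w / 2)) => H; [left|right].
  by case.
have [F1|I1] := pselect (finite_set S1).
  exists S2; split.
  - by move=> k [].
  - move=> F2; apply: Sinf; rewrite HS finite_setU; by split.
  - exists (lo + w / 2) => k [Sk /= Hk]; have /andP[_ h2] := Hb k Sk.
    rewrite (ltW Hk) /=; apply: (le_trans h2); rewrite -addrA lerD2l.
    by rewrite {1}(splitr w).
exists S1; split.
- by move=> k [].
- exact: I1.
- exists lo => k [Sk /= Hk]; have /andP[h1 _] := Hb k Sk.
  by rewrite h1 Hk.
Qed.

Lemma halve_iter (R : realType) (a : nat -> R) (S : set nat) (M : R) :
  infinite_set S -> (forall k, `|a k| <= M) -> forall m : nat,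
  exists S', [/\ S' `<=` S, infinite_set S' &
    exists lo, forall k, S' k -> lo <= a k <= lo + (2 * M) / 2 ^+ m].
Proof.
move=> Sinf HM; elim=> [|m [S' [sub inf [lo Hlo]]]].
  exists S; split => //; exists (- M) => k _.
  have := HM k; rewrite ler_norml => /andP[h1 h2].
  by rewrite expr0 divr1 h1 /=; rewrite mulr2n mulrDl mul1r addKr.
have [S'' [sub' inf' [lo' Hlo']]] := @halve_step _ a _ _ _ inf Hlo.
exists S''; split => //.
  by move=> k /sub' /sub.
exists lo' => k /Hlo'; by rewrite exprSr invfM mulrA.
Qed.

Lemma cluster1 (R : realType) (a : nat -> R) (S : set nat) (M d : R) :
  infinite_set S -> (forall k, `|a k| <= M) -> 0 < d ->
  exists S', [/\ S' `<=` S, infinite_set S' &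
    exists c, forall k, S' k -> `|a k - c| <= d].
Proof.
move=> Sinf HM d0.
have M0 : 0 <= M := le_trans (normr_ge0 _) (HM 0%N).
have h0 : 0 <= 2 * M / d by rewrite divr_ge0 ?mulr_ge0 // ltW.
set m := Num.Def.archi_bound (2 * M / d).
have hm : 2 * M / d < 2 ^+ m.
  apply: (lt_trans (archi_boundP h0)).
  by rewrite -natrX ltr_nat ltn_expl.
have [S' [sub inf [lo Hlo]]] := @halve_iter _ a _ _ Sinf HM m.
exists S'; split => //; exists lo => k /Hlo /andP[h1 h2].
have h3 : 2 * M / 2 ^+ m <= d.
  rewrite ler_pdivrMr ?exprn_gt0 //.
  by rewrite ltr_pdivrMr // in hm; rewrite [d * _]mulrC ltW.
rewrite ger0_norm ?subr_ge0 //.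
by rewrite lerBlDl (le_trans h2) // lerD2l.
Qed.

Lemma clusterN (R : realType) (F : nat -> nat -> R) (S : set nat) (M d : R) :
  infinite_set S -> (forall i k, `|F i k| <= M) -> 0 < d -> forall m : nat,
  exists S', [/\ S' `<=` S, infinite_set S' &
    forall i, (i < m)%N -> exists c, forall k, S' k -> `|F i k - c| <= d].
Proof.
move=> Sinf HM d0; elim=> [|m [S' [sub inf H]]].
  by exists S; split.
have [S'' [sub' inf' [c Hc]]] := @cluster1 _ (F m) _ _ _ inf (HM m) d0.
exists S''; split => //.
  by move=> k /sub' /sub.
move=> i; rewrite ltnS leq_eqVlt => /orP[/eqP ->|/H [c' Hc']].
  by exists c.
by exists c' => k /sub' /Hc'.
Qed.

Lemma sum_const_seq (R : realType) (s : seq nat) (d : R) :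
  \sum_(k <- s) d = (size s)%:R * d.
Proof.
elim: s => [|a s IH]; first by rewrite big_nil mul0r.
by rewrite big_cons IH /= -add1n natrD mulrDl mul1r.
Qed.

Lemma est (R : realType) (s : seq nat) (eps v : nat -> R) (c d : R) :
  (forall k, k \in s -> `|eps k| = 1) -> \sum_(k <- s) eps k = 0 ->
  (forall k, k \in s -> `|v k - c| <= d) ->
  `|\sum_(k <- s) eps k * v k| <= (size s)%:R * d.
Proof.
move=> He Hs Hv.
have -> : \sum_(k <- s) eps k * v k = \sum_(k <- s) eps k * (v k - c).
  under [in RHS]eq_bigr => k _ do rewrite mulrBr.
  by rewrite sumrB -mulr_suml Hs mul0r subr0.
apply: (le_trans (ler_norm_sum _ _ _)).
rewrite -sum_const_seq big_seq [X in _ <= X]big_seq; apply: ler_sum => k ks.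
by rewrite normrM He // mul1r Hv.
Qed.

Lemma pair_sum_l (R : realType) (X Y : normedModType R) (pair : X -> Y -> R)
  (Hbil : bilinear_pairing pair) (s : seq nat) (eps : nat -> R) (x : nat -> X) yy :
  pair (\sum_(k <- s) eps k *: x k) yy = \sum_(k <- s) eps k * pair (x k) yy.
Proof.
case: Hbil => H1 _.
have H0 : pair 0 yy = 0.
  have := H1 1 0 0 yy; rewrite scaler0 addr0 mul1r => h.
  by have := congr1 (fun t => t - pair 0 yy) h; rewrite /= subrr addrK.
elim: s => [|a s IH]; first by rewrite !big_nil.
by rewrite !big_cons H1 IH.
Qed.

Lemma pair_sum_r (R : realType) (X Y : normedModType R) (pair : X -> Y -> R)
  (Hbil : bilinear_pairing pair) (s : seq nat) (eps : nat -> R) (y : nat -> Y) xx :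
  pair xx (\sum_(k <- s) eps k *: y k) = \sum_(k <- s) eps k * pair xx (y k).
Proof.
case: Hbil => _ H1.
have H0 : pair xx 0 = 0.
  have := H1 1 xx 0 0; rewrite scaler0 addr0 mul1r => h.
  by have := congr1 (fun t => t - pair xx 0) h; rewrite /= subrr addrK.
elim: s => [|a s IH]; first by rewrite !big_nil.
by rewrite !big_cons H1 IH.
Qed.

Theorem lemma3p1 (R : realType) (X Y : completeNormedModType R)
  (pair : X -> Y -> R) (Cd : R) (e : nat -> X) (f : nat -> Y)
  (Hbil : bilinear_pairing pair)
  (Hstd : standing_assumptions pair Cd e f)
  (I : set nat) (HI : infinite_set I) (n L : nat) (HL : ~~ odd L)
  (eta : R) (Heta : 0 < eta)
  (x : nat -> X) (y : nat -> Y)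
  (Hx : exists M : R, forall j, `|x j| <= M)
  (Hy : exists M : R, forall j, `|y j| <= M) :
  exists Lam : set nat,
    [/\ Lam `<=` I, infinite_set Lam,
     (forall (B : {fset nat}) (eps : nat -> R) (j : nat),
        [set k | k \in B] `<=` Lam -> #|` B| = L -> balanced_signs B eps ->
        (1 <= j <= n)%N ->
        `|pair (\sum_(k <- B) eps k *: x k) (y j)| <= eta) &
     (forall (B : {fset nat}) (eps : nat -> R) (j : nat),
        [set k | k \in B] `<=` Lam -> #|` B| = L -> balanced_signs B eps ->
        (1 <= j <= n)%N ->
        `|pair (x j) (\sum_(k <- B) eps k *: y k)| <= eta)].
Proof.
case: Hstd => _ _ [Cd0 HCd] _ _.
case: Hx => Mx HMx; case: Hy => My HMy.
have Mx0 : 0 <= Mx := le_trans (normr_ge0 _) (HMx 0%N).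
have My0 : 0 <= My := le_trans (normr_ge0 _) (HMy 0%N).
have Hb : forall a b, `|pair (x a) (y b)| <= Cd * Mx * My.
  move=> a b; apply: (le_trans (HCd _ _)).
  by rewrite -!mulrA ler_pM2l //; apply: ler_pM.
set d := eta / (L.+1)%:R.
have d0 : 0 < d by rewrite divr_gt0.
have [S1 [sub1 inf1 H1]] := @clusterN _ (fun i k => pair (x k) (y i)) _ _ _ HI
  (fun i k => Hb k i) d0 n.+1.
have [S2 [sub2 inf2 H2]] := @clusterN _ (fun i k => pair (x i) (y k)) _ _ _ inf1
  (fun i k => Hb i k) d0 n.+1.
have Ld : L%:R * d <= eta.
  rewrite /d mulrA ler_pdivrMr // mulrC ler_pM2l // ler_nat //.
have epsn : forall (B : {fset nat}) (eps : nat -> R), balanced_signs B eps ->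
    forall k, k \in (B : seq nat) -> `|eps k| = 1.
  by move=> B eps [Hs _] k /Hs [->|->]; rewrite ?normrN normr1.
exists S2; split => //.
- by move=> k /sub2 /sub1.
- move=> B eps j HB HBL Heps /andP[j1 jn].
  have [c Hc] := H1 j jn.
  rewrite (@pair_sum_l _ _ _ _ Hbil).
  apply: (le_trans _ Ld); rewrite -HBL.
  apply: (@est _ _ _ _ c d); first exact: epsn Heps.
    by case: Heps.
  by move=> k kB; apply: Hc; apply: sub2; apply: HB.
- move=> B eps j HB HBL Heps /andP[j1 jn].
  have [c Hc] := H2 j jn.
  rewrite (@pair_sum_r _ _ _ _ Hbil).
  apply: (le_trans _ Ld); rewrite -HBL.
  apply: (@est _ _ _ _ c d); first exact: epsn Heps.
    by case: Heps.
  by move=> k kB; apply: Hc; apply: HB.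
Qed.
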